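(* Let $T$ be a tree with $k$ leaves, let $1\le l$ be an integer, and let $s$ and $t$ be disjoint subtrees of $T$ such that $s$ has $l$ boundary nodes and $t$ has $k-l+2$ boundary nodes. Then every node of $T$ of degree greater than two belongs to $s$ or to $t$.
   Context: A subtree of a tree $T$ is a nonempty set of nodes inducing a connected subgraph. A boundary node of a subtree $t$ of $T$ is a node of $t$ that has a neighbour in $T$ not belonging to $t$. *)

(* Defs.v *)
(* A finite simple graph on a finType T is a symmetric,
   irreflexive boolean relation e : rel T. *)
From mathcomp Require Import all_boot.
Set Implicit Arguments. Unset Strict Implicit. Unset Printing Implicit Defensive.

Section Trees.
Variables (T : finType) (e : rel T).

Definition simple_graph : Prop := symmetric e /\ irreflexive e.

Definition connected_graph : Prop := forall x y : T, connect e x y.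

Definition acyclic : Prop := forall c : seq T, ucycle e c -> size c < 3.

Definition is_tree : Prop :=
  simple_graph /\ 0 < #|T| /\ connected_graph /\ acyclic.

Definition neighbours (x : T) : {set T} := [set y | e x y].
Definition degree (x : T) : nat := #|neighbours x|.
Definition leaves : {set T} := [set x | degree x == 1].

Definition induced (A : {set T}) : rel T :=
  [rel u v | [&& e u v, u \in A & v \in A]].

Definition is_subtree (A : {set T}) : Prop :=
  A != set0 /\ {in A &, forall x y, connect (induced A) x y}.

Definition boundary (A : {set T}) : {set T} :=
  [set x in A | [exists y, e x y && (y \notin A)]].

End Trees.

(* Main.v *)
Require Import Defs.
From mathcomp Require Import all_boot zify.
Set Implicit Arguments. Unset Strict Implicit. Unset Printing Implicit Defensive.

Section S.
Variables (T : finType) (e : rel T).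
Hypothesis esym : symmetric e.
Hypothesis eirr : irreflexive e.
Hypothesis eac : acyclic e.

Definition br (x y : T) : {set T} := [set z | connect (induced e (~: [set x])) y z].

Lemma induced_in A a b : connect (induced e A) a b -> a \in A -> b \in A.
Proof.
move/connectP=> [p pth ->]; elim: p a pth => //= c p IH a /andP[/and3P[_ _ hc] hp] _.
exact: IH.
Qed.

Lemma CR (r : rel T) (P : pred T) a b : connect r a b -> ~~ P a -> P b ->
  exists u v, [/\ connect r a u, r u v, ~~ P u & P v].
Proof.
move/connectP=> [p pth ->]; elim: p a pth => /= [a _ h1 h2|c p IH a /andP[hac hp] Pa Pl].
  by rewrite h2 in h1.
case Pc: (P c).
  by exists a, c; split=> //; rewrite Pc.
have [u [v [h1 h2 h3 h4]]] := IH c hp (negbT Pc) Pl.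
exists u, v; split=> //; exact: connect_trans (connect1 hac) h1.
Qed.

Lemma self_br x y : y \in br x y.
Proof. by rewrite inE connect0. Qed.

Lemma e_neq x y : e x y -> y != x.
Proof. by move=> exy; apply/eqP=> h; subst; rewrite eirr in exy. Qed.

Lemma notin_br x y : e x y -> x \notin br x y.
Proof.
move=> exy; apply/negP; rewrite inE => /induced_in H.
have : x \in ~: [set x] by apply: H; rewrite !inE (e_neq exy).
by rewrite !inE eqxx.
Qed.

Lemma br_neq x y z : e x y -> z \in br x y -> z != x.
Proof. by move=> exy zin; apply/eqP=> h; subst; rewrite (negPf (notin_br exy)) in zin. Qed.

Lemma br_closed x y z w : e x y -> z \in br x y -> e z w -> w != x -> w \in br x y.
Proof.
move=> exy zin ezw wx; move: (zin); rewrite !inE => c; apply: connect_trans c (connect1 _).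
by rewrite /induced /= ezw !inE (br_neq exy zin) wx.
Qed.

Lemma induced_path A a p : path (induced e A) a p -> path e a p /\ all (mem A) p.
Proof.
elim: p a => //= c p IH a /andP[/and3P[h1 h2 h3] hp]; have [h4 h5] := IH c hp.
by rewrite h1 h4 h3 h5.
Qed.

Lemma AC x y u : e x y -> e x u -> u != y -> u \in br x y -> False.
Proof.
move=> exy exu uy; rewrite inE => /connectP[p pth ul].
case/shortenP: pth ul => p' pth' upq _ ul.
have [ep allp] := induced_path pth'.
have yx : y != x by apply/eqP=> h; subst; rewrite eirr in exy.
have sz : size (x :: y :: p') < 3 = false.
  case: p' {pth' upq ep allp} ul => /= [h|]; last by [].
  by rewrite h eqxx in uy.
suff : ucycle e (x :: y :: p') by move/eac; rewrite sz.
apply/andP; split.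
  rewrite /cycle /= exy rcons_path ep /= -ul esym exu //.
rewrite cons_uniq upq andbT inE negb_or eq_sym yx /=.
apply/negP=> xp; move/allP: allp => /(_ x xp); by rewrite !inE eqxx.
Qed.

Lemma DISJ x1 y1 x2 y2 z : e x1 y1 -> e x2 y2 -> (x1, y1) != (x2, y2) ->
  x2 \notin br x1 y1 -> x1 \notin br x2 y2 -> z \in br x1 y1 -> z \in br x2 y2 -> False.
Proof.
move=> e1 e2 neq n21 n12 z1 z2.
case: (boolP (y2 \in br x1 y1)) => hy.
  have e2' : e y2 x2 by rewrite esym.
  case: (eqVneq x2 x1) => [h|h].
    subst x2; apply: (AC e1 e2 _ hy).
    by apply: contra neq => /eqP ->.
  by rewrite (br_closed e1 hy e2' h) in n21.
move: (z2); rewrite inE => c.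
have [u [v [cu ruv nu pv]]] := CR (P := mem (br x1 y1)) c hy z1.
move: ruv => /and3P[euv _ _].
have evu : e v u by rewrite esym.
case: (eqVneq u x1) => [h|h].
  subst u; by rewrite inE cu in n12.
by case/negP: nu; exact: br_closed e1 pv evu h.
Qed.

Lemma CONT (A : {set T}) x y z1 z : {in A &, forall a b, connect (induced e A) a b} ->
  x \notin A -> e x y -> z1 \in A -> z1 \in br x y -> z \in A -> z \in br x y.
Proof.
move=> Ac xA exy z1A z1B zA; case: (boolP (z \in br x y)) => // hz.
have nz1 : ~~ (z1 \notin br x y) by rewrite z1B.
have [u [v [_ /and3P[euv _ vA] nu pv]]] :=
  CR (P := [pred w | w \notin br x y]) (Ac _ _ z1A zA) nz1 hz.
case: (eqVneq v x) => [h|h]; first by subst v; rewrite vA in xA.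
by case/negP: pv; exact: br_closed exy (negbNE nu) euv h.
Qed.

Lemma SIDE (A : {set T}) x y z : {in A &, forall a b, connect (induced e A) a b} ->
  x \in A -> y \notin A -> e x y -> z \in A -> z \notin br x y.
Proof.
move=> Ac xA yA exy zA; apply/negP=> zB.
have nx : x \notin br x y := notin_br exy.
have nz : ~~ (z \notin br x y) by rewrite zB.
have [u [v [_ /and3P[euv uA vA] nu pv]]] :=
  CR (P := [pred w | w \notin br x y]) (Ac _ _ zA xA) nz nx.
have uB : u \in br x y := negbNE nu.
case: (eqVneq v x) => [h|h]; last by case/negP: pv; exact: br_closed exy uB euv h.
subst v; apply: (AC exy (u := u)) => //; first by rewrite esym.
by apply/eqP=> h; subst u; rewrite uA in yA.
Qed.

Lemma SUB x y v w : e x y -> e v w -> w \in br x y -> x \notin br v w ->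
  br v w \subset br x y.
Proof.
move=> exy evw wB xn; apply/subsetP => z zin; case: (boolP (z \in br x y)) => // hz.
move: (zin); rewrite inE => c.
have nw : ~~ (w \notin br x y) by rewrite wB.
have [u [u' [cu ruu' nu pu']]] :=
  CR (P := [pred q | q \notin br x y]) c nw hz.
move: (ruu') => /and3P[euu' _ _].
have uB : u \in br x y := negbNE nu.
case: (eqVneq u' x) => [h|h]; last by case/negP: pu'; exact: br_closed exy uB euu' h.
subst u'; case/negP: xn; rewrite inE; apply: connect_trans cu (connect1 _).
exact: ruu'.
Qed.

Lemma LEAF x0 y0 : e x0 y0 -> exists z, z \in br x0 y0 /\ z \in leaves e.
Proof.
suff H : forall n x y, #|br x y| <= n -> e x y -> exists z, z \in br x y /\ z \in leaves e.
  by move=> exy; exact: H (leqnn _) exy.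
elim=> [|n IH] x y hn exy.
  by move: hn; rewrite leqn0 => /eqP/cards0_eq/setP/(_ y); rewrite self_br inE.
case: (boolP (degree e y == 1)) => hd.
  by exists y; rewrite self_br inE hd.
have xN : x \in neighbours e y by rewrite inE esym.
have : 0 < #|neighbours e y :\ x|.
  move: hd; rewrite /degree (cardsD1 x) xN add1n; by case: #|_|.
case/card_gt0P => y' /setD1P[y'x]; rewrite inE => eyy'.
have xn : x \notin br y y'.
  apply/negP=> xin; apply: (AC eyy' (u := x)) => //; first by rewrite esym.
  by rewrite eq_sym.
have sub : br y y' \subset br x y.
  by apply: SUB => //; apply: br_closed exy (self_br _ _) eyy' y'x.
have lt : #|br y y'| < #|br x y|.
  apply: proper_card; rewrite properE sub /=; apply/subsetPn; exists y.
    exact: self_br.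
  exact: notin_br.
have hn' : #|br y y'| <= n by rewrite -ltnS (leq_trans lt hn).
have [z [zin zl]] := IH y y' hn' eyy'.
by exists z; split => //; exact: (subsetP sub).
Qed.

Lemma noI (A B : {set T}) z : A :&: B == set0 -> z \in A -> z \in B -> False.
Proof. by move/eqP/setP/(_ z); rewrite !inE => h zA zB; rewrite zA zB in h. Qed.

Lemma someI (A B : {set T}) : A :&: B != set0 -> exists z, z \in A /\ z \in B.
Proof. by case/set0Pn=> z; rewrite inE => /andP[]; exists z. Qed.

Lemma COUNT (R : {set T}) (D : {set T * T}) :
  (forall d, d \in D -> [/\ e d.1 d.2, d.1 \in R & br d.1 d.2 :&: R == set0]) ->
  #|D| <= #|leaves e|.
Proof.
move=> HD.
pose f (d : T * T) := odflt d.1 [pick z in br d.1 d.2 :&: leaves e].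
have fP d : d \in D -> f d \in br d.1 d.2 /\ f d \in leaves e.
  move=> /HD[ed _ _]; rewrite /f; case: pickP => [z|] /=.
    by rewrite inE => /andP[].
  move=> H; have [z [z1 z2]] := LEAF ed; have := H z; by rewrite inE z1 z2.
rewrite -(card_in_imset (f := f)).
  apply: subset_leq_card; apply/subsetP => z /imsetP[d dD ->]; exact: (fP d dD).2.
move=> d1 d2 d1D d2D hf; apply/eqP; apply/negP=> neq.
have [e1 R1 I1] := HD d1 d1D; have [e2 R2 I2] := HD d2 d2D.
have [z1 _] := fP d1 d1D; have [z2 _] := fP d2 d2D.
rewrite hf in z1.
apply: (DISJ e1 e2 _ _ _ z1 z2).
- apply/negP=> /eqP[h1 h2]; apply: neq; apply/eqP.
  by rewrite [d1]surjective_pairing [d2]surjective_pairing h1 h2.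
- by apply/negP=> h; exact: (noI I1 h R2).
- by apply/negP=> h; exact: (noI I2 h R1).
Qed.

Definition conn (A : {set T}) := {in A &, forall a b, connect (induced e A) a b}.

Lemma caseB (s t : {set T}) v x y ws wt : conn s ->
  v \notin s -> x \in s -> e x y ->
  br x y :&: t == set0 -> v \in br x y -> e v ws -> e v wt -> ws != wt ->
  br v ws :&: s != set0 -> br v wt :&: t != set0 -> False.
Proof.
move=> sc vs xs exy It vB evs evt wn Is It'.
have [zs [zsB zsS]] := someI Is.
have [zt [ztB ztT]] := someI It'.
have xB : x \in br v ws := CONT sc vs evs zsS zsB xs.
have D z : z \in br v ws -> z \in br v wt -> False.
  move=> h1 h2; apply: (DISJ evs evt _ (notin_br _) (notin_br _) h1 h2) => //.
  by apply/negP=> /eqP[]; apply/eqP.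
have wx : wt != x by apply/eqP=> h; apply: (D x xB); rewrite -h self_br.
have wB : wt \in br x y := br_closed exy vB evt wx.
have xn : x \notin br v wt by apply/negP; exact: D.
have sub := SUB exy evt wB xn.
exact: (noI It (subsetP sub _ ztB) ztT).
Qed.

Lemma pair_neq (d1 d2 : T * T) : d1 != d2 -> (d1.1, d1.2) != (d2.1, d2.2).
Proof. by rewrite -!surjective_pairing. Qed.

Lemma eq_common (d1 d2 : T * T) z : e d1.1 d1.2 -> e d2.1 d2.2 ->
  d2.1 \notin br d1.1 d1.2 -> d1.1 \notin br d2.1 d2.2 ->
  z \in br d1.1 d1.2 -> z \in br d2.1 d2.2 -> d1 = d2.
Proof.
move=> e1 e2 n1 n2 z1 z2; apply/eqP; case: (boolP (d1 == d2)) => // neq.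
by case: (DISJ e1 e2 (pair_neq neq) n1 n2 z1 z2).
Qed.

Definition Os (s : {set T}) := [set d : T * T | [&& d.1 \in s, d.2 \notin s & e d.1 d.2]].
Definition Ds (s t : {set T}) v :=
  [set d in Os s | (br d.1 d.2 :&: t == set0) && (v \notin br d.1 d.2)].
Definition Xt (s t : {set T}) := [set d in Os s | br d.1 d.2 :&: t != set0].
Definition Xv (s t : {set T}) v :=
  [set d in Os s | (br d.1 d.2 :&: t == set0) && (v \in br d.1 d.2)].
Definition Vs v (s : {set T}) :=
  [set d : T * T | [&& d.1 == v, e d.1 d.2 & br d.1 d.2 :&: s != set0]].
Definition Dv v (s t : {set T}) :=
  [set d : T * T | [&& d.1 == v, e d.1 d.2, br d.1 d.2 :&: s == set0 & br d.1 d.2 :&: t == set0]].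

Lemma cardU_le (A B : {set T * T}) : #|A :|: B| <= #|A| + #|B|.
Proof. by rewrite cardsU leq_subr. Qed.

Lemma L_bd s : #|boundary e s| <= #|Os s|.
Proof.
apply: leq_trans (leq_imset_card fst _); apply: subset_leq_card; apply/subsetP => x.
rewrite inE => /andP[xs /existsP[y /andP[exy ys]]].
by apply/imsetP; exists (x, y) => //; rewrite inE /= xs ys exy.
Qed.

Lemma L_Os s t v : #|Os s| <= #|Ds s t v| + #|Xt s t| + #|Xv s t v|.
Proof.
apply: leq_trans (leq_add (cardU_le _ _) (leqnn _)) ; apply: leq_trans (cardU_le _ _).
apply: subset_leq_card; apply/subsetP => d; rewrite !inE => dO; rewrite dO /=.
by case: (br d.1 d.2 :&: t == set0); case: (connect _ d.2 v).
Qed.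

Lemma Os_prop s d : conn s -> d \in Os s ->
  [/\ d.1 \in s, d.2 \notin s, e d.1 d.2 & br d.1 d.2 :&: s == set0].
Proof.
move=> sc; rewrite inE => /and3P[h1 h2 h3]; split=> //.
apply/eqP/setP => z; rewrite !inE; apply/negP => /andP[zB zs].
by case/negP: (SIDE sc h1 h2 h3 zs); rewrite inE.
Qed.

Lemma L_Xt s t : conn s -> conn t -> s :&: t == set0 -> #|Xt s t| <= 1.
Proof.
move=> sc tc st; apply/card_le1_eqP => d1 d2.
move=> /setIdP[O1 I1] /setIdP[O2 I2].
have [x1s _ e1 J1] := Os_prop sc O1; have [x2s _ e2 J2] := Os_prop sc O2.
have [z [zB zt]] := someI I1; have [z' [zB' zt']] := someI I2.
have x2t : d2.1 \notin t by apply/negP => h; exact: (noI st x2s h).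
have zB2 := CONT tc x2t e2 zt' zB' zt.
symmetry; apply: (eq_common e1 e2 _ _ zB zB2).
  by apply/negP=> h; exact: (noI J1 h x2s).
by apply/negP=> h; exact: (noI J2 h x1s).
Qed.

Lemma L_Xv s t v : conn s -> #|Xv s t v| <= 1.
Proof.
move=> sc; apply/card_le1_eqP => d1 d2.
move=> /setIdP[O1 /andP[_ v1]] /setIdP[O2 /andP[_ v2]].
have [x1s _ e1 J1] := Os_prop sc O1; have [x2s _ e2 J2] := Os_prop sc O2.
symmetry; apply: (eq_common e1 e2 _ _ v1 v2).
  by apply/negP=> h; exact: (noI J1 h x2s).
by apply/negP=> h; exact: (noI J2 h x1s).
Qed.

Lemma L_Vs v s : conn s -> v \notin s -> #|Vs v s| <= 1.
Proof.
move=> sc vs; apply/card_le1_eqP => d1 d2.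
rewrite !inE => /and3P[/eqP r1 e1 I1] /and3P[/eqP r2 e2 I2].
have [z [zB zs]] := someI I1; have [z' [zB' zs']] := someI I2.
have vs' : d2.1 \notin s by rewrite r2.
have zB2 := CONT sc vs' e2 zs' zB' zs.
symmetry; apply: (eq_common e1 e2 _ _ zB zB2).
  by rewrite r2 -r1; exact: notin_br.
by rewrite r1 -r2; exact: notin_br.
Qed.

Lemma L_Nv v s t : degree e v <= #|Dv v s t| + #|Vs v s :|: Vs v t|.
Proof.
rewrite /degree -(card_imset (f := pair v)); last by move=> a b [].
apply: leq_trans (cardU_le _ _); apply: subset_leq_card; apply/subsetP => d.
case/imsetP => w; rewrite inE => evw ->; rewrite !inE /= eqxx evw /=.
by case: (br v w :&: s == set0); case: (br v w :&: t == set0).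
Qed.

Lemma F1 s t v d1 d2 : s :&: t == set0 -> conn s -> conn t ->
  d1 \in Xv s t v -> d2 \in Xv t s v -> False.
Proof.
move=> st sc tc /setIdP[O1 /andP[I1 v1]] /setIdP[O2 /andP[I2 v2]].
have [x1s _ e1 _] := Os_prop sc O1; have [x2t _ e2 _] := Os_prop tc O2.
have h : d1 = d2.
  apply: (eq_common e1 e2 _ _ v1 v2).
    by apply/negP=> h; exact: (noI I1 h x2t).
  by apply/negP=> h; exact: (noI I2 h x1s).
by subst d2; exact: (noI st x1s x2t).
Qed.

Lemma XvB s t v ds dt : conn s -> v \notin s -> ds \in Vs v s -> dt \in Vs v t ->
  ds != dt -> Xv s t v = set0.
Proof.
move=> sc vs; rewrite !inE => /and3P[/eqP r1 e1 I1] /and3P[/eqP r2 e2 I2] neq.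
apply/eqP; apply/negPn/negP => /set0Pn[d /setIdP[O /andP[I vin]]].
have [xs _ exy _] := Os_prop sc O.
rewrite r1 in e1 I1; rewrite r2 in e2 I2.
apply: (caseB sc vs xs exy I vin e1 e2 _ I1 I2).
apply: contra neq => /eqP h.
by rewrite [ds]surjective_pairing [dt]surjective_pairing r1 r2 h.
Qed.

Lemma cardU_disj (A B : {set T * T}) : A :&: B == set0 -> #|A :|: B| = #|A| + #|B|.
Proof. by move/eqP=> H; rewrite cardsU H cards0 subn0. Qed.

Lemma brR (B s t : {set T}) v : B :&: s == set0 -> B :&: t == set0 -> v \notin B ->
  B :&: (s :|: t :|: [set v]) == set0.
Proof.
move=> /eqP/setP Hs /eqP/setP Ht vB; apply/eqP/setP => z; move: (Hs z) (Ht z).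
rewrite !inE; case: (eqVneq z v) => [->|]; first by rewrite (negbTE vB).
by case: (z \in B) => //= _ -> ->.
Qed.

Lemma inDv d v s t : (d \in Dv v s t) =
  [&& d.1 == v, e d.1 d.2, br d.1 d.2 :&: s == set0 & br d.1 d.2 :&: t == set0].
Proof. by rewrite inE. Qed.

Lemma main k l s t v : #|leaves e| = k -> conn s -> conn t -> s :&: t == set0 ->
  #|boundary e s| = l -> #|boundary e t| + l = k + 2 -> 2 < degree e v ->
  v \notin s -> v \notin t -> False.
Proof.
move=> hk sc tc st hl hkl hdeg vs vt.
have ts : t :&: s == set0 by rewrite setIC.
set R := s :|: t :|: [set v].
set D := Ds s t v :|: Ds t s v :|: Dv v s t.
have HD : #|D| <= #|leaves e|.
  apply: (COUNT (R := R)) => d; rewrite !in_setU => /orP[/orP[]|].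
  - move=> /setIdP[O /andP[It vB]]; have [xs _ exy Is] := Os_prop sc O.
    by split=> //; [rewrite !inE xs | exact: brR].
  - move=> /setIdP[O /andP[Is vB]]; have [xt _ exy It] := Os_prop tc O.
    by split=> //; [rewrite !inE xt orbT | exact: brR].
  - rewrite inDv => /and4P[/eqP r exy Is It]; split=> //; first by rewrite !inE r eqxx !orbT.
    by apply: brR => //; rewrite r; rewrite r in exy; exact: notin_br.
have HDc : #|D| = #|Ds s t v| + #|Ds t s v| + #|Dv v s t|.
  rewrite /D !cardU_disj //.
    apply/eqP/setP => d; rewrite !inE; apply/negbTE/negP.
    move=> /andP[/and3P[/and3P[ds _ _] _ _] /and3P[/and3P[dt _ _] _ _]].
    by case: (noI st ds dt).
  apply/eqP/setP => d; rewrite !inE; apply/negbTE/negP.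
  move=> /andP[/orP[] /and3P[/and3P[ds _ _] _ _] /and4P[/eqP r _ _ _]].
    by rewrite -r ds in vs.
  by rewrite -r ds in vt.
have h1 := L_bd s; have h2 := L_bd t.
have h3 := L_Os s t v; have h4 := L_Os t s v.
have h5 := L_Xt sc tc st; have h6 := L_Xt tc sc ts.
have h7 := L_Xv t v sc; have h8 := L_Xv s v tc.
have h9 := L_Nv v s t.
have h10 := L_Vs sc vs; have h11 := L_Vs tc vt.
have h12 : (#|Xv s t v| == 0) || (#|Xv t s v| == 0).
  case: (set_0Vmem (Xv s t v)) => [->|[d1 d1X]]; first by rewrite cards0.
  case: (set_0Vmem (Xv t s v)) => [->|[d2 d2X]]; first by rewrite cards0 orbT.
  by case: (F1 st sc tc d1X d2X).
have h13 : (#|Vs v s :|: Vs v t| <= 1) || (#|Xv s t v| + #|Xv t s v| == 0).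
  case: (boolP (Vs v s :&: Vs v t == set0)) => I.
    case: (set_0Vmem (Vs v s)) => [E|[ds dsV]]; first by rewrite E set0U h11.
    case: (set_0Vmem (Vs v t)) => [E|[dt dtV]]; first by rewrite E setU0 h10.
    have neq : ds != dt.
      by apply/eqP=> h; subst dt; move/eqP/setP: I => /(_ ds); rewrite inE dsV dtV inE.
    rewrite (XvB sc vs dsV dtV neq) (XvB tc vt dtV dsV _) ?cards0 ?orbT //.
    by rewrite eq_sym.
  rewrite cardsU; apply/orP; left.
  move: (h10) (h11); rewrite -card_gt0 in I.
  move: I; set a := #|_ :&: _|; set b := #|Vs v s|; set c := #|Vs v t|; lia.
have h14 := cardU_le (Vs v s) (Vs v t).
have hD : #|Ds s t v| + #|Ds t s v| + #|Dv v s t| <= k by rewrite -HDc -hk.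
case/orP: h12 => /eqP h12; case/orP: h13 => h13; try move/eqP: h13 => h13.
all: move: h14 h1 h2 h3 h4 h5 h6 h7 h8 h9 h10 h11 hD h12 h13 hdeg hkl hl; set X1 := #|Ds s t v|; set X2 := #|Ds t s v|; set X3 := #|Dv v s t|; set X4 := #|Vs v s :|: Vs v t|; set X5 := #|Xv s t v|; set X6 := #|Xv t s v|; set Y1 := #|boundary e s|; set Y2 := #|boundary e t|; set Y3 := degree e v; set Y4 := #|Os s|; set Y5 := #|Os t|; set P1 := #|Xt s t|; set P2 := #|Xt t s|; set V1 := #|Vs v s|; set V2 := #|Vs v t|.
all: clearbody X1 X2 X3 X4 X5 X6 Y1 Y2 Y3 Y4 Y5 P1 P2 V1 V2; intros.
- lia.
- lia.
- lia.
- lia.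
Qed.
End S.


Theorem lemma3 (T : finType) (e : rel T) (k l : nat) (s t : {set T}) :
  is_tree e ->
  #|leaves e| = k ->
  1 <= l ->
  is_subtree e s -> is_subtree e t ->
  [disjoint s & t] ->
  #|boundary e s| = l ->
  #|boundary e t| + l = k + 2 ->
  forall v : T, 2 < degree e v -> (v \in s) || (v \in t).
Proof.
move=> [[esym eirr] [_ [_ eac]]] hk _ [_ sc] [_ tc] dj hl hkl v hv.
apply/negPn/negP => /norP[vs vt].
apply: (main esym eirr eac hk sc tc _ hl hkl hv vs vt).
by rewrite (disjoint_setI0 dj).
Qed.
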